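(* Let $\chi$ be an indecomposable character on $S(2^\infty)$ with GNS triple $(\pi,\mathcal{H},\xi)$, and let $\alpha\in[0,\infty]$ be such that $tr(P^A)=\mu(A)^\alpha$ for every nice $A\subset X$. Let $s\in S(2^\infty)$ be such that, regarded as a permutation of $X_n$ for some $n$ with $s\in S(2^n)$, all cycles of $s$ have length $1$ or even length. Then $\chi(s)=\mu(Fix(s))^\alpha$.
   Context: Let $X=\{0,1\}^{\mathbb{N}}$ with product measure $\mu=\nu^{\otimes\infty}$, $\nu(\{0\})=\nu(\{1\})=1/2$; $X_n=\{0,1\}^n$; $S(2^n)$ the group of all bijections of $X_n$, acting on $X$ by $s((x,a))=(s(x),a)$; $S(2^\infty)=\bigcup_n S(2^n)$; $Fix(s)=\{x\in X:s(x)=x\}$. A character on a group $G$ is a function $\chi$ with $\chi(g_1g_2)=\chi(g_2g_1)$, $(\chi(g_ig_j^{-1}))_{i,j}$ positive semidefinite for all finite families, and $\chi(e)=1$; indecomposable means not a nontrivial convex combination of two distinct characters. GNS triple: $\pi$ unitary representation on $\mathcal{H}$, $\xi$ unit cyclic vector, $\chi(g)=(\pi(g)\xi,\xi)$; $tr(T)=(T\xi,\xi)$. $A\subset X$ is nice if $A=C\times X$ for some $k$ and $C\subset X_k$. For such $A$ and $m>k$, $s^A_m$ fixes $A$ pointwise and flips the $m$-th coordinate of points outside $A$; $P^A$ is the weak operator limit of $\pi(s^A_m)$. Conventions: $0^0=1$, $x^\infty=0$ for $x\in[0,1)$, $1^\infty=1$. *)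

(* Defs.v *)
From HB Require Import structures.
From mathcomp Require Import all_boot all_order all_algebra all_fingroup.
From mathcomp Require Import all_classical all_reals all_analysis.
From mathcomp Require Import complex.
Set Implicit Arguments. Unset Strict Implicit. Unset Printing Implicit Defensive.
Import Order.TTheory GRing.Theory Num.Theory.
Local Open Scope ring_scope.

(* X = {0,1}^N (coordinates indexed from 0), X_n = n.-tuple bool. *)
Definition X := nat -> bool.

Definition pref (n : nat) (x : X) : n.-tuple bool := [tuple x (nat_of_ord i) | i < n].

(* s in S(2^n) acting on X by s((x,a)) = (s(x),a) *)
Definition actS2 (n : nat) (s : {perm n.-tuple bool}) : X -> X :=
  fun x k => match ltnP k n with
             | LtnNotGeq Hk => tnth (s (pref n x)) (Ordinal Hk)
             | _ => x k
             end.

(* elements of S(2^oo), given by a level n and a permutation in S(2^n);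
   the group element itself is the map act, group product is composition *)
Definition S2el := {n : nat & {perm n.-tuple bool}}.
Definition elt (g : S2el) : X -> X := actS2 (projT2 g).
Definition elt_inv (g : S2el) : X -> X := actS2 (projT2 g)^-1.
Definition inS2inf (f : X -> X) : Prop := exists g : S2el, f = elt g.

(* characters on S(2^oo) (complex valued); chi is a function on maps X -> X,
   only its values on S(2^oo) matter *)
Definition is_character (R : realType) (chi : (X -> X) -> R[i]) : Prop :=
  [/\ (forall g1 g2 : S2el, chi (elt g1 \o elt g2) = chi (elt g2 \o elt g1)),
      (forall (k : nat) (g : 'I_k -> S2el) (c : 'I_k -> R[i]),
          0 <= \sum_(i < k) \sum_(j < k)
                 (c i)^* * c j * chi (elt (g i) \o elt_inv (g j)))
    & chi id = 1].

Definition is_indecomposable_character (R : realType)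
    (chi : (X -> X) -> R[i]) : Prop :=
  is_character chi /\
  forall (t : R) (chi1 chi2 : (X -> X) -> R[i]),
    0 < t < 1 -> is_character chi1 -> is_character chi2 ->
    (forall g : S2el, chi (elt g) = (t%:C)%C * chi1 (elt g) + ((1 - t)%:C)%C * chi2 (elt g)) ->
    (forall g : S2el, chi1 (elt g) = chi2 (elt g)).

(* nice set A = C x X *)
Definition cyl (k : nat) (C : {set k.-tuple bool}) : set X :=
  [set x | pref k x \in C].

Definition mu_cyl (R : realType) (k : nat) (C : {set k.-tuple bool}) : R :=
  #|C|%:R / 2%:R ^+ k.

(* s^A_m for A = C x X : fixes A, flips coordinate m outside A *)
Definition sA (k : nat) (C : {set k.-tuple bool}) (m : nat) : X -> X :=
  fun x => if pref k x \in C then x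
           else fun j => if j == m then ~~ x j else x j.

(* x ^ alpha, alpha in [0, +oo], with 0^0 = 1, x^oo = 0 for x in [0,1), 1^oo = 1 *)
Definition powE (R : realType) (x : R) (a : \bar R) : R :=
  match a with
  | EFin r => x `^ r
  | +oo%E => if x == 1 then 1 else 0
  | -oo%E => 0
  end.

Definition cycles_one_or_even (n : nat) (s : {perm n.-tuple bool}) : Prop :=
  forall t : n.-tuple bool, #|porbit s t| = 1%N \/ ~~ odd #|porbit s t|.

(* Fix(s) = {x | s x = x} = F x X with F the fixed tuples *)
Definition fixed_tuples (n : nat) (s : {perm n.-tuple bool}) : {set n.-tuple bool} :=
  [set t | s t == t].

(* Main.v *)
Require Import Defs.
From HB Require Import structures.
From mathcomp Require Import all_boot all_order all_algebra all_fingroup.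
From mathcomp Require Import all_classical all_reals all_analysis.
From mathcomp Require Import complex.
Import Order.TTheory GRing.Theory Num.Theory.
Import numFieldNormedType.Exports.
From mathcomp Require Import ring.
Local Open Scope classical_set_scope.
Local Open Scope ring_scope.
Set Implicit Arguments. Unset Strict Implicit. Unset Printing Implicit Defensive.
Definition agree (M : nat) (x y : X) := forall k, (k < M)%N -> x k = y k.

Lemma tnth_pref n x (i : 'I_n) : tnth (pref n x) i = x i.
Proof. by rewrite /pref tnth_mktuple. Qed.

Lemma pref_agree n x y : pref n x = pref n y <-> agree n x y.
Proof.
split=> [E k kn|A].
  by have := congr1 (fun t => tnth t (Ordinal kn)) E; rewrite !tnth_pref.
by apply: eq_from_tnth => i; rewrite !tnth_pref A.
Qed.

Lemma actS2_lt n (p : {perm n.-tuple bool}) x (i : 'I_n) :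
  actS2 p x i = tnth (p (pref n x)) i.
Proof.
rewrite /actS2; case: ltnP => H; first by congr tnth; apply: val_inj.
by move: (ltn_ord i); rewrite ltnNge H.
Qed.

Lemma actS2_ge n (p : {perm n.-tuple bool}) x k : (n <= k)%N -> actS2 p x k = x k.
Proof. by rewrite /actS2; case: ltnP => //; rewrite ltnNge => /negP. Qed.

Lemma pref_actS2 n (p : {perm n.-tuple bool}) x : pref n (actS2 p x) = p (pref n x).
Proof. by apply: eq_from_tnth => i; rewrite tnth_pref actS2_lt. Qed.

Definition loc (M : nat) (f : X -> X) :=
  (forall x k, (M <= k)%N -> f x k = x k) /\
  (forall x y, agree M x y -> agree M (f x) (f y)).

Definition Gr M (f f' : X -> X) := [/\ loc M f, loc M f', cancel f f' & cancel f' f].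

Definition ext M (t : M.-tuple bool) : X := fun k => nth false t k.

Lemma pref_ext M (t : M.-tuple bool) : pref M (ext t) = t.
Proof. by apply: eq_from_tnth => i; rewrite tnth_pref /ext (tnth_nth false). Qed.

Lemma agree_ext M x : agree M (ext (pref M x)) x.
Proof.
move=> k kM; rewrite /ext -[k]/(nat_of_ord (Ordinal kM)) -tnth_nth.
by rewrite tnth_pref.
Qed.

Lemma actS2_loc M (q : {perm M.-tuple bool}) (g : X -> X) :
  loc M g -> (forall t, q t = pref M (g (ext t))) -> actS2 q = g.
Proof.
move=> [g1 g2] qE; apply: funext => x; apply: funext => k.
case: (ltnP k M) => kM; last by rewrite actS2_ge // g1.
rewrite -[k]/(nat_of_ord (Ordinal kM)) actS2_lt qE tnth_pref.
exact: g2 (agree_ext x) _ kM.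
Qed.

Lemma Gr_elt M f f' : Gr M f f' -> exists e : S2el, elt e = f /\ elt_inv e = f'.
Proof.
case=> lf lf' ff' f'f.
pose F (t : M.-tuple bool) := pref M (f (ext t)).
pose F' (t : M.-tuple bool) := pref M (f' (ext t)).
have FK : cancel F F'.
  move=> t; rewrite /F /F'.
  have : agree M (f' (ext (pref M (f (ext t))))) (f' (f (ext t))).
    by apply: lf'.2; apply: agree_ext.
  by rewrite ff' => /pref_agree ->; rewrite pref_ext.
pose p := perm (can_inj FK).
exists (existT _ M p); split.
  by apply: actS2_loc => // t; rewrite permE.
apply: actS2_loc => // t.
have E : p (F' t) = t.
  rewrite permE /F /F'.
  have : agree M (f (ext (pref M (f' (ext t))))) (f (f' (ext t))).
    by apply: lf.2; apply: agree_ext.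
  by rewrite f'f => /pref_agree ->; rewrite pref_ext.
by rewrite -{1}E permK.
Qed.

Lemma loc_id M : loc M id.
Proof. by split. Qed.

Lemma loc_comp M f g : loc M f -> loc M g -> loc M (f \o g).
Proof.
move=> [f1 f2] [g1 g2]; split=> [x k kM|x y A] /=; first by rewrite f1 // g1.
by apply: f2; apply: g2.
Qed.

Lemma loc_mono M M' f : (M <= M')%N -> loc M f -> loc M' f.
Proof.
move=> MM' [f1 f2]; split=> [x k kM|x y A k kM].
  by apply: f1; apply: leq_trans kM.
case: (ltnP k M) => kM'; first by apply: f2 => // j jM; apply: A; apply: leq_trans MM'.
rewrite !f1 //; exact: A.
Qed.

Lemma Gr_comp M f f' g g' : Gr M f f' -> Gr M g g' -> Gr M (f \o g) (g' \o f').
Proof.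
case=> a b c d [a' b' c' d']; split; try exact: loc_comp.
  by move=> x /=; rewrite c c'.
by move=> x /=; rewrite d' d.
Qed.

Lemma Gr_sym M f f' : Gr M f f' -> Gr M f' f.
Proof. by case. Qed.

Lemma Gr_id M : Gr M id id.
Proof. by split=> //; apply: loc_id. Qed.

Lemma Gr_mono M M' f f' : (M <= M')%N -> Gr M f f' -> Gr M' f f'.
Proof. by move=> h [a b c d]; split=> //; apply: loc_mono h _. Qed.

Lemma Gr_actS2 M n (p : {perm n.-tuple bool}) : (n <= M)%N ->
  Gr M (actS2 p) (actS2 p^-1).
Proof.
move=> nM.
have L : forall q : {perm n.-tuple bool}, loc M (actS2 q).
  move=> q; apply: loc_mono nM _; split; first by move=> x k; apply: actS2_ge.
  by move=> x y /pref_agree A; apply/pref_agree; rewrite !pref_actS2 A.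
have C : forall q : {perm n.-tuple bool}, cancel (actS2 q) (actS2 q^-1).
  move=> q x; apply: funext => k; case: (ltnP k n) => kn; last by rewrite !actS2_ge.
  by rewrite -[k]/(nat_of_ord (Ordinal kn)) actS2_lt pref_actS2 permK tnth_pref.
split; try exact: L; first exact: C.
by move=> x; have := C (p^-1)%g x; rewrite invgK.
Qed.
Lemma chi_conj (R : realType) (chi : (X -> X) -> R[i]) M g g' h h' :
  is_character chi -> Gr M g g' -> Gr M h h' -> chi (g \o h \o g') = chi h.
Proof.
case=> cC _ _ Gg Gh.
have [e1 [E1 _]] := Gr_elt (Gr_comp Gg Gh).
have [e2 [E2 _]] := Gr_elt (Gr_sym Gg).
have := cC e1 e2; rewrite E1 E2 => ->.
case: Gg => _ _ gK _; congr chi; apply: funext => x /=; by rewrite gK.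
Qed.

Lemma psd_fam (R : realType) (chi : (X -> X) -> R[i]) (T : finType) M
  (G G' : T -> X -> X) (c : T -> R[i]) :
  is_character chi -> (forall x, Gr M (G x) (G' x)) ->
  0 <= \sum_(x : T) \sum_(y : T) (c x)^* * c y * chi (G x \o G' y).
Proof.
case=> _ cP _ HG.
have H : forall x, exists e : S2el, elt e = G x /\ elt_inv e = G' x.
  by move=> x; apply: Gr_elt.
pose e x := projT1 (cid (H x)).
have eE x : elt (e x) = G x /\ elt_inv (e x) = G' x := projT2 (cid (H x)).
have := cP #|T| (fun i => e (enum_val i)) (fun i => c (enum_val i)).
rewrite (big_enum_val (A := predT) (fun x => \sum_(y : T) (c x)^* * c y * chi (G x \o G' y))).
congr (_ <= _); apply: eq_bigr => i _.
rewrite (big_enum_val (A := predT) (fun y => (c (enum_val i))^* * c y * chi (G (enum_val i) \o G' y))).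
apply: eq_bigr => j _.
by have [-> _] := eE (enum_val i); have [_ ->] := eE (enum_val j).
Qed.

Lemma sum_diag (R : realType) (N : nat) (a b : R[i]) :
  \sum_(i < N) \sum_(j < N) (if i == j then a else b) = N%:R * a + (N * (N - 1))%:R * b.
Proof.
have E : forall i : 'I_N, \sum_(j < N) (if i == j then a else b) = a + (N - 1)%:R * b.
  move=> i; rewrite (bigD1 i) //= eqxx; congr (_ + _).
  rewrite (eq_bigr (fun _ => b)); last by move=> j /negbTE; rewrite eq_sym => ->.
  rewrite sumr_const cardC1 card_ord mulr_natl subn1 //.
rewrite (eq_bigr _ (fun i _ => E i)) sumr_const card_ord.
rewrite mulrnDl; congr (_ + _); first by rewrite mulr_natl.
by rewrite -mulrnAl -mulrnA mulnC.
Qed.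
Definition orho (T : finType) (s : {perm T}) (t : T) : T :=
  odflt t [pick y in porbit s t].
Definition oper (T : finType) (s : {perm T}) (t : T) : nat := #|porbit s t|.
Definition oidx (T : finType) (s : {perm T}) (t : T) : nat :=
  index t (traject s (orho s t) (oper s t)).

Lemma porbit_s (T : finType) (s : {perm T}) t : porbit s (s t) = porbit s t.
Proof. by have := porbit_perm s 1 t; rewrite expg1. Qed.

Lemma porbit_iter (T : finType) (s : {perm T}) k t : porbit s (iter k s t) = porbit s t.
Proof. by rewrite -permX porbit_perm. Qed.

Lemma orho_in (T : finType) (s : {perm T}) t : orho s t \in porbit s t.
Proof. rewrite /orho; case: pickP => [y //|/(_ t)]; by rewrite porbit_id. Qed.

Lemma porbit_rho (T : finType) (s : {perm T}) t : porbit s (orho s t) = porbit s t.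
Proof. by apply/eqP; rewrite eq_porbit_mem orho_in. Qed.

Lemma orho_eq (T : finType) (s : {perm T}) t t' :
  porbit s t = porbit s t' -> orho s t = orho s t'.
Proof.
move=> E; rewrite /orho E; case: pickP => [//|/(_ t')]; by rewrite porbit_id.
Qed.

Lemma oper_eq (T : finType) (s : {perm T}) t t' :
  porbit s t = porbit s t' -> oper s t = oper s t'.
Proof. by move=> E; rewrite /oper E. Qed.

Lemma oidx_spec (T : finType) (s : {perm T}) t :
  (oidx s t < oper s t)%N /\ iter (oidx s t) s (orho s t) = t.
Proof.
have tin : t \in traject s (orho s t) (oper s t).
  have := porbit_traject s (orho s t) t; rewrite porbit_rho /oper => <-.
  exact: porbit_id.
split; first by rewrite /oidx -{2}(size_traject s (orho s t) (oper s t)) index_mem.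
have := nth_index (orho s t) tin; rewrite nth_traject //.
by rewrite -{2}(size_traject s (orho s t) (oper s t)) index_mem.
Qed.

Lemma oidx_iter (T : finType) (s : {perm T}) t k : (k < oper s t)%N ->
  oidx s (iter k s (orho s t)) = k.
Proof.
move=> kp; rewrite /oidx.
have E : porbit s (iter k s (orho s t)) = porbit s t by rewrite porbit_iter porbit_rho.
rewrite (orho_eq E) (oper_eq E).
have U : uniq (traject s (orho s t) (oper s t)).
  by rewrite /oper -(porbit_rho s t); apply: uniq_traject_porbit.
rewrite -(nth_traject s kp (orho s t)) index_uniq // size_traject //.
Qed.

Lemma iter_oper (T : finType) (s : {perm T}) t : iter (oper s t) s (orho s t) = orho s t.
Proof. by rewrite /oper -(porbit_rho s t) iter_porbit. Qed.

Lemma oper_gt0 (T : finType) (s : {perm T}) t : (0 < oper s t)%N.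
Proof. by rewrite lt0n card_porbit_neq0. Qed.

Definition osig (T : finType) (s : {perm T}) (t : T) : T :=
  iter (oper s t - oidx s t) s (orho s t).

Lemma osig_props (T : finType) (s : {perm T}) :
  [/\ forall t, osig s (osig s t) = t, forall t, s t = t -> osig s t = t
    & forall t, s (osig s (s t)) = osig s t].
Proof.
have Ep t k : porbit s (iter k s (orho s t)) = porbit s t by rewrite porbit_iter porbit_rho.
split.
- move=> t; have [dp dt] := oidx_spec s t.
  rewrite {2}/osig; set k := (oper s t - oidx s t)%N.
  rewrite /osig (orho_eq (Ep t k)) (oper_eq (Ep t k)).
  case: (posnP (oidx s t)) => d0.
    have o0 : oidx s (orho s t) = 0%N := oidx_iter (k:=0) (oper_gt0 s t).
    rewrite /k d0 subn0 iter_oper o0 subn0 iter_oper.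
    by move: dt; rewrite d0.
  have Hk : (k < oper s t)%N by rewrite /k ltn_subrL d0 oper_gt0.
  rewrite (oidx_iter Hk).
  have -> : (oper s t - k = oidx s t)%N by rewrite /k subKn // ltnW.
  exact: dt.
- move=> t st.
  have fx : forall k y, y = t -> iter k s y = t.
    by move=> k y ->; elim: k => //= k ->.
  rewrite /osig; apply: (fx).
  move: (orho_in s t) => /porbitP [i ->]; rewrite permX; exact: (fx i t).
- move=> t; have [dp dt] := oidx_spec s t.
  have Est : porbit s (s t) = porbit s t by apply: porbit_s.
  rewrite /osig (orho_eq Est) (oper_eq Est).
  have -> : s t = iter (oidx s t).+1 s (orho s t) by rewrite iterS dt.
  case: (ltnP (oidx s t).+1 (oper s t)) => h.
    rewrite (oidx_iter h).
    have -> : forall k, s (iter k s (orho s t)) = iter k.+1 s (orho s t) by [].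
    apply: (congr1 (fun k => iter k s (orho s t))).
    by rewrite subnS prednK // subn_gt0.
  have dE : (oidx s t).+1 = oper s t by apply/eqP; rewrite eqn_leq dp.
  rewrite dE iter_oper.
  have o0 : oidx s (orho s t) = 0%N := oidx_iter (k:=0) (oper_gt0 s t).
  rewrite o0 subn0 iter_oper -dE subSnn //.
Qed.

Definition oQ (T : finType) (s : {perm T}) (t : T) : bool :=
  (s t != t) && odd (oidx s t).

Lemma oQ_props (T : finType) (s : {perm T}) :
  (forall t, #|porbit s t| = 1%N \/ ~~ odd #|porbit s t|) ->
  (forall t, oQ s t -> s t != t) /\ (forall t, s t != t -> oQ s (s t) = ~~ oQ s t).
Proof.
move=> Hc; split=> [t /andP[] //|t nst].
have nsst : s (s t) != s t by apply: contra nst => /eqP /perm_inj ->.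
rewrite /oQ nst nsst /=.
have [dp dt] := oidx_spec s t.
have Est : porbit s (s t) = porbit s t by apply: porbit_s.
have -> : s t = iter (oidx s t).+1 s (orho s t) by rewrite iterS dt.
case: (ltnP (oidx s t).+1 (oper s t)) => h.
  by rewrite (oidx_iter h) /=.
have dE : (oidx s t).+1 = oper s t by apply/eqP; rewrite eqn_leq dp.
have pe : ~~ odd (oper s t).
  case: (Hc t) => // p1.
  have : s t \in porbit s t by rewrite -(porbit_s s t) porbit_id.
  rewrite porbit_traject p1 /= ?mem_seq1 ?inE ?orbF => /eqP E; by rewrite E eqxx in nst.
rewrite dE iter_oper.
have o0 : oidx s (orho s t) = 0%N := oidx_iter (k:=0) (oper_gt0 s t).
rewrite o0 /=.
by move: pe; rewrite -dE /= => /negPn ->.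
Qed.
Definition flip (m : nat) (x : X) : X := fun k => if k == m then ~~ x k else x k.
Definition cnot (i j : nat) (x : X) : X := fun k => if k == j then x j (+) x i else x k.
Definition swp (i j : nat) (x : X) : X :=
  fun k => if k == i then x j else if k == j then x i else x k.
Definition gR (R : X -> X) (i : nat) (x : X) : X := if x i then R x else x.
Definition hQ n (Q : pred (n.-tuple bool)) (i j : nat) (x : X) : X :=
  if Q (pref n x) then flip i (flip j x) else x.

Lemma X_ext n (a b : X) : pref n a = pref n b -> (forall k, (n <= k)%N -> a k = b k) -> a = b.
Proof.
move=> /pref_agree P H; apply: funext => k; case: (ltnP k n) => kn; [exact: P | exact: H].
Qed.

Lemma pref_low n (f : X -> X) x : (forall k, (k < n)%N -> f x k = x k) -> pref n (f x) = pref n x.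
Proof. by move=> H; apply/pref_agree => k /H. Qed.

Lemma pref_flip n m x : (n <= m)%N -> pref n (flip m x) = pref n x.
Proof.
move=> nm; apply: pref_low => k kn; rewrite /flip.
by case: eqP => // E; move: kn; rewrite E ltnNge nm.
Qed.

Lemma pref_sA n (C : {set n.-tuple bool}) m x : (n <= m)%N -> pref n (sA C m x) = pref n x.
Proof. by move=> nm; rewrite /sA; case: ifP => // _; apply: pref_flip. Qed.

Lemma pref_cnot n i j x : (n <= j)%N -> pref n (cnot i j x) = pref n x.
Proof.
move=> nm; apply: pref_low => k kn; rewrite /cnot.
by case: eqP => // E; move: kn; rewrite E ltnNge nm.
Qed.

Lemma pref_swp n i j x : (n <= i)%N -> (n <= j)%N -> pref n (swp i j x) = pref n x.
Proof.
move=> ni nj; apply: pref_low => k kn; rewrite /swp.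
case: eqP => [E|_]; first by move: kn; rewrite E ltnNge ni.
by case: eqP => // E; move: kn; rewrite E ltnNge nj.
Qed.

Lemma sAE n (C : {set n.-tuple bool}) m x k :
  sA C m x k = if pref n x \in C then x k else if k == m then ~~ x k else x k.
Proof. by rewrite /sA; case: ifP. Qed.

Lemma flipK m : cancel (flip m) (flip m).
Proof. by move=> x; apply: funext => k; rewrite /flip; case: eqP => // ->; rewrite negbK. Qed.

Lemma sAK n (C : {set n.-tuple bool}) m : (n <= m)%N -> cancel (sA C m) (sA C m).
Proof.
move=> nm x; rewrite {1}/sA pref_sA //; case: ifP => H; rewrite /sA H //.
exact: flipK.
Qed.

Lemma sA_comm n (C : {set n.-tuple bool}) i j : (n <= i)%N -> (n <= j)%N ->
  sA C i \o sA C j = sA C j \o sA C i.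
Proof.
move=> ni nj; apply: funext => x /=; apply: (X_ext (n := n)).
  by rewrite !pref_sA.
move=> k nk; rewrite !sAE !pref_sA //; case: (pref n x \in C) => //.
by case: (k == i); case: (k == j).
Qed.
Lemma loc_of M f : (forall x k, (M <= k)%N -> f x k = x k) ->
  (forall x y, agree M x y -> agree M (f x) (f y)) -> loc M f.
Proof. by split. Qed.

Lemma agree_pref n M x y : (n <= M)%N -> agree M x y -> pref n x = pref n y.
Proof. by move=> nM A; apply/pref_agree => k kn; apply: A; apply: leq_trans nM. Qed.

Lemma loc_sA n M (C : {set n.-tuple bool}) m : (n <= m)%N -> (m < M)%N -> loc M (sA C m).
Proof.
move=> nm mM; have nM : (n <= M)%N by apply: leq_trans (ltnW mM).
apply: loc_of => [x k Mk|x y A k kM]; rewrite !sAE.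
  have -> : (k == m) = false by apply/eqP => E; move: mM; rewrite -E ltnNge Mk.
  by case: ifP.
by rewrite (agree_pref nM A) A.
Qed.

Lemma loc_cnot M i j : (i < M)%N -> (j < M)%N -> loc M (cnot i j).
Proof.
move=> iM jM; apply: loc_of => [x k Mk|x y A k kM]; rewrite /cnot.
  by have -> : (k == j) = false by apply/eqP => E; move: jM; rewrite -E ltnNge Mk.
by rewrite !A.
Qed.

Lemma loc_swp M i j : (i < M)%N -> (j < M)%N -> loc M (swp i j).
Proof.
move=> iM jM; apply: loc_of => [x k Mk|x y A k kM]; rewrite /swp.
  have -> : (k == j) = false by apply/eqP => E; move: jM; rewrite -E ltnNge Mk.
  by have -> : (k == i) = false by apply/eqP => E; move: iM; rewrite -E ltnNge Mk.
by rewrite !A.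
Qed.

Lemma loc_gR M R i : (i < M)%N -> loc M R -> loc M (gR R i).
Proof.
move=> iM [R1 R2]; apply: loc_of => [x k Mk|x y A]; rewrite /gR.
  by case: ifP => // _; apply: R1.
by rewrite (A i iM); case: ifP => // _; apply: R2.
Qed.

Lemma loc_hQ n M (Q : pred (n.-tuple bool)) i j : (n <= M)%N -> (i < M)%N -> (j < M)%N ->
  loc M (hQ Q i j).
Proof.
move=> nM iM jM; apply: loc_of => [x k Mk|x y A k kM]; rewrite /hQ.
  case: ifP => // _; rewrite /flip.
  have -> : (k == j) = false by apply/eqP => E; move: jM; rewrite -E ltnNge Mk.
  by have -> : (k == i) = false by apply/eqP => E; move: iM; rewrite -E ltnNge Mk.
rewrite (agree_pref nM A); case: ifP => _; last exact: A.
by rewrite /flip !A.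
Qed.

Lemma cnotK i j : i != j -> cancel (cnot i j) (cnot i j).
Proof.
move=> ij x; apply: funext => k; rewrite /cnot eqxx (negbTE ij).
by case: eqP => // ->; rewrite -addbA addbb addbF.
Qed.

Lemma swpK i j : cancel (swp i j) (swp i j).
Proof.
move=> x; apply: funext => k; rewrite /swp.
have [->|ki] := eqVneq k i.
  by rewrite eqxx; have [->|ji] := eqVneq j i; rewrite ?eqxx // (negbTE ji) eqxx.
have [kj|kj] := eqVneq k j; last by [].
by rewrite eqxx kj.
Qed.

Lemma gRK R i : (forall x, R (R x) = x) -> (forall x, R x i = x i) -> cancel (gR R i) (gR R i).
Proof. by move=> RR Ri x; rewrite /gR; case h: (x i); rewrite ?Ri h ?RR. Qed.

Lemma hQK n (Q : pred (n.-tuple bool)) i j : (n <= i)%N -> (n <= j)%N -> cancel (hQ Q i j) (hQ Q i j).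
Proof.
move=> ni nj x; rewrite /hQ; case h: (Q (pref n x)); last by rewrite h.
rewrite !pref_flip // h; apply: funext => k; rewrite /flip.
by case: (k == i); case: (k == j); rewrite ?negbK.
Qed.
Ltac eqsplit := repeat (match goal with |- context [?a == ?b] =>
  let E := fresh "E" in case E: (a == b); [move/eqP: E => E; try subst | try (by rewrite eqxx in E)] end);
  try done; try (match goal with H : (?a == ?a) = false |- _ => by rewrite eqxx in H end);
  try (match goal with H : is_true (?a != ?a) |- _ => by rewrite eqxx in H end).
Ltac boolx x := repeat (match goal with |- context [x ?m] => case: (x m) end); try done.

Lemma swpE i j x k : swp i j x k = if k == i then x j else if k == j then x i else x k.
Proof. by []. Qed.
Lemma cnotE i j x k : cnot i j x k = if k == j then x j (+) x i else x k.
Proof. by []. Qed.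
Lemma flipE m x k : flip m x k = if k == m then ~~ x k else x k.
Proof. by []. Qed.

Lemma sA_in n (C : {set n.-tuple bool}) i y : pref n y \in C -> sA C i y = y.
Proof. by rewrite /sA => ->. Qed.
Lemma sA_out n (C : {set n.-tuple bool}) i y : pref n y \notin C -> sA C i y = flip i y.
Proof. by rewrite /sA => /negbTE ->. Qed.

Lemma conj_swp n (C : {set n.-tuple bool}) i j : (n <= i)%N -> (n <= j)%N ->
  swp i j \o sA C i \o swp i j = sA C j.
Proof.
move=> ni nj; apply: funext => x /=; apply: (X_ext (n:=n)).
  by rewrite pref_swp // pref_sA // pref_swp // pref_sA.
move=> k nk; rewrite swpE !sAE !pref_swp // !swpE.
case: (pref n x \in C); eqsplit.
Qed.

Lemma conj_cnot n (C : {set n.-tuple bool}) i j : (n <= i)%N -> (n <= j)%N -> i != j ->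
  cnot i j \o sA C i \o cnot i j = sA C i \o sA C j.
Proof.
move=> ni nj ij; apply: funext => x /=; apply: (X_ext (n:=n)).
  by rewrite pref_cnot // pref_sA // pref_cnot // !pref_sA.
move=> k nk; rewrite cnotE !sAE !pref_cnot // ?pref_sA // !cnotE ?sAE ?pref_sA //.
case: (pref n x \in C); eqsplit; boolx x.
Qed.

Lemma cnot_actS2 n (p : {perm n.-tuple bool}) i j : (n <= i)%N -> (n <= j)%N ->
  cnot i j \o actS2 p = actS2 p \o cnot i j.
Proof.
move=> ni nj; apply: funext => x /=; apply: (X_ext (n:=n)).
  by rewrite pref_cnot // !pref_actS2 pref_cnot.
move=> k nk; rewrite cnotE !actS2_ge // cnotE.
Qed.

Lemma actS2_sA n (p : {perm n.-tuple bool}) (C : {set n.-tuple bool}) m : (n <= m)%N ->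
  (forall t, (p t \in C) = (t \in C)) ->
  actS2 p \o sA C m = sA C m \o actS2 p.
Proof.
move=> nm pC; apply: funext => x /=; apply: (X_ext (n:=n)).
  by rewrite pref_actS2 !pref_sA // pref_actS2.
move=> k nk; rewrite actS2_ge // !sAE pref_actS2 pC !actS2_ge //.
Qed.

Lemma conj_gR n (r : {perm n.-tuple bool}) (C : {set n.-tuple bool}) i : (n <= i)%N ->
  (forall t, r (r t) = t) -> (forall t, t \in C -> r t = t) ->
  gR (actS2 r) i \o (actS2 r \o sA C i) \o gR (actS2 r) i = sA C i.
Proof.
move=> ni rr rC.
have rCC : forall t, (r t \in C) = (t \in C).
  move=> t; apply/idP/idP => [h|h]; last by rewrite rC.
  by have := rC _ h; rewrite rr => ->.
have RR : forall x, actS2 r (actS2 r x) = x.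
  move=> x; apply: (X_ext (n:=n)); first by rewrite !pref_actS2 rr.
  by move=> k nk; rewrite !actS2_ge.
have RC : forall x, pref n x \in C -> actS2 r x = x.
  move=> x xC; apply: (X_ext (n:=n)); first by rewrite pref_actS2 rC.
  by move=> k nk; rewrite actS2_ge.
have Ri : forall y, actS2 r y i = y i by move=> y; rewrite actS2_ge.
have Rf : forall y, actS2 r (flip i y) = flip i (actS2 r y).
  move=> y; apply: (X_ext (n:=n)); first by rewrite pref_actS2 !pref_flip // pref_actS2.
  by move=> k nk; rewrite actS2_ge // !flipE actS2_ge.
have fi : forall y, flip i y i = ~~ y i by move=> y; rewrite flipE eqxx.
apply: funext => x /=; rewrite /gR.
case xC: (pref n x \in C); case hx: (x i).
- by rewrite sA_in ?pref_actS2 ?rCC // RR hx sA_in // RC.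
- by rewrite sA_in // Ri hx RC.
- by rewrite sA_out ?pref_actS2 ?rCC ?xC // Ri fi Ri hx /= Rf RR sA_out ?xC.
- by rewrite sA_out ?xC // Ri fi hx /= RR.
Qed.
Lemma actS2_flip n (p : {perm n.-tuple bool}) i y : (n <= i)%N ->
  actS2 p (flip i y) = flip i (actS2 p y).
Proof.
move=> ni; apply: (X_ext (n:=n)); first by rewrite pref_actS2 !pref_flip // pref_actS2.
by move=> k nk; rewrite actS2_ge // !flipE actS2_ge.
Qed.

Lemma conj_h n (s : {perm n.-tuple bool}) (Q : pred (n.-tuple bool)) i j :
  (n <= i)%N -> (n <= j)%N ->
  (forall t, Q t -> s t != t) -> (forall t, s t != t -> Q (s t) = ~~ Q t) ->
  hQ Q i j \o actS2 s \o hQ Q i j = actS2 s \o sA (fixed_tuples s) i \o sA (fixed_tuples s) j.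
Proof.
move=> ni nj Q1 Q2; apply: funext => x /=.
have Cin : forall y, (pref n y \in fixed_tuples s) = (s (pref n y) == pref n y).
  by move=> y; rewrite inE.
case st: (s (pref n x) == pref n x).
  have Qf : Q (pref n x) = false by apply/negP => /Q1; rewrite st.
  have S1 : actS2 s x = x.
    apply: (X_ext (n:=n)); first by rewrite pref_actS2 (eqP st).
    by move=> k nk; rewrite actS2_ge.
  rewrite sA_in; last by rewrite Cin ?pref_sA // st.
  rewrite sA_in; last by rewrite Cin st.
  by rewrite /hQ Qf S1 Qf.
have nst : s (pref n x) != pref n x by rewrite st.
rewrite sA_out; last by rewrite Cin ?pref_sA // st.
rewrite sA_out; last by rewrite Cin st.
rewrite /hQ; case Qx: (Q (pref n x)).
  by rewrite pref_actS2 !pref_flip // (Q2 _ nst) Qx.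
by rewrite pref_actS2 (Q2 _ nst) Qx !actS2_flip.
Qed.
Lemma lim_evconst (R : realType) (f : nat -> R) (l c : R) (n : nat) :
  (forall m, (n <= m)%N -> f m = c) -> f @ \oo --> l -> c = l.
Proof.
move=> H Hl.
have Hc : f @ \oo --> c.
  apply: cvg_near_cst; exists n => // m /= nm; exact: H.
exact: (cvg_unique _ Hc Hl).
Qed.

Definition eqf (f g : X -> X) (E : f = g) x : f x = g x := congr1 (fun h => h x) E.

Lemma chi_swap (R : realType) (chi : (X -> X) -> R[i]) M f f' g g' :
  is_character chi -> Gr M f f' -> Gr M g g' -> chi (f \o g) = chi (g \o f).
Proof.
case=> cC _ _ Gf Gg; have [e1 [E1 _]] := Gr_elt Gf; have [e2 [E2 _]] := Gr_elt Gg.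
by have := cC e1 e2; rewrite E1 E2.
Qed.

Lemma fam_sum (R : realType) (chi : (X -> X) -> R[i]) M (m N : nat)
  (U : 'I_N -> X -> X) (F F' : 'I_m -> X -> X) (c : 'I_m -> R[i]) (A B : 'I_m -> 'I_m -> R[i]) :
  is_character chi -> (forall i, Gr M (U i) (U i)) -> (forall a, Gr M (F a) (F' a)) ->
  (forall a b i j, chi (F a \o U i \o (U j \o F' b)) = if i == j then A a b else B a b) ->
  0 <= \sum_(a < m) \sum_(b < m) (c a)^* * c b * (N%:R * A a b + (N * (N - 1))%:R * B a b).
Proof.
move=> Hc GU GF HK.
have := @psd_fam R chi ('I_m * 'I_N)%type M (fun x => F x.1 \o U x.2) (fun x => U x.2 \o F' x.1)
  (fun x => c x.1) Hc (fun x => Gr_comp (GF x.1) (GU x.2)).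
rewrite -(pair_bigA _ (fun a i => \sum_(y : 'I_m * 'I_N) (c a)^* * c y.1 * chi (F a \o U i \o (U y.2 \o F' y.1)))).
under eq_bigr => a _.
  under eq_bigr => i _.
    rewrite -(pair_bigA _ (fun b j => (c a)^* * c b * chi (F a \o U i \o (U j \o F' b)))).
    over.
  rewrite exchange_big /=.
  under eq_bigr => b _.
    rewrite exchange_big /=.
    under eq_bigr => i _.
      under eq_bigr => j _ do rewrite HK eq_sym.
      rewrite -mulr_sumr.
      over.
    rewrite -mulr_sumr sum_diag.
    over.
  over.
done.
Qed.
Lemma real_squeeze (R : realType) (d K1 K2 : R) :
  (forall N : nat, (0 < N)%N -> d *+ N <= K1 /\ - K2 <= d *+ N) -> d = 0.
Proof.
move=> H.
have key : forall e K : R, (forall N : nat, (0 < N)%N -> e *+ N <= K) -> e <= 0.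
  move=> e K He; rewrite leNgt; apply/negP => epos.
  pose N := (Num.bound (`|K| / e)).+1.
  have hb : `|K| / e < N%:R.
    apply: lt_le_trans (archi_boundP _) _; first by rewrite divr_ge0 // ltW.
    by rewrite ler_nat /N.
  have := He N isT; apply/negP; rewrite -ltNge.
  apply: le_lt_trans (ler_norm K) _.
  have h2 : `|K| / e * e < N%:R * e by rewrite ltr_pM2r.
  by rewrite divfK ?gt_eqF // mulr_natl in h2.
apply/eqP; rewrite eq_le; apply/andP; split.
  by apply: (key d K1) => N /H [].
rewrite -oppr_le0; apply: (key (- d) K2) => N /H [_]; by rewrite mulNrn lerNl.
Qed.

Lemma Gr_u n M (C : {set n.-tuple bool}) m : (n <= m)%N -> (m < M)%N -> Gr M (sA C m) (sA C m).
Proof. by move=> nm mM; split; [exact: loc_sA nm mM|exact: loc_sA nm mM|exact: sAK|exact: sAK]. Qed.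

Lemma Gr_cnot M i j : (i < M)%N -> (j < M)%N -> i != j -> Gr M (cnot i j) (cnot i j).
Proof. by move=> iM jM ij; split; [exact: loc_cnot|exact: loc_cnot|exact: cnotK|exact: cnotK]. Qed.

Lemma Gr_swp M i j : (i < M)%N -> (j < M)%N -> Gr M (swp i j) (swp i j).
Proof. by move=> iM jM; split; [exact: loc_swp|exact: loc_swp|exact: swpK|exact: swpK]. Qed.

Lemma Gr_hQ n M (Q : pred (n.-tuple bool)) i j : (n <= i)%N -> (n <= j)%N -> (i < M)%N -> (j < M)%N ->
  Gr M (hQ Q i j) (hQ Q i j).
Proof.
move=> ni nj iM jM; have nM : (n <= M)%N by apply: leq_trans (ltnW iM).
by split; [exact: loc_hQ|exact: loc_hQ|exact: hQK|exact: hQK].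
Qed.

Lemma invol_inv n (r : {perm n.-tuple bool}) : (forall t, r (r t) = t) -> (r^-1)%g = r.
Proof. by move=> rr; apply/permP => t; apply: (@perm_inj _ r); rewrite permKV rr. Qed.

Lemma Gr_invol n M (r : {perm n.-tuple bool}) : (n <= M)%N -> (forall t, r (r t) = t) ->
  Gr M (actS2 r) (actS2 r).
Proof. by move=> nM rr; have := Gr_actS2 r nM; rewrite invol_inv. Qed.

Lemma actS2_invol n (r : {perm n.-tuple bool}) x : (forall t, r (r t) = t) -> actS2 r (actS2 r x) = x.
Proof.
move=> rr; apply: (X_ext (n:=n)); first by rewrite !pref_actS2 rr.
by move=> k nk; rewrite !actS2_ge.
Qed.

Lemma Gr_gR n M (r : {perm n.-tuple bool}) i : (n <= i)%N -> (i < M)%N -> (forall t, r (r t) = t) ->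
  Gr M (gR (actS2 r) i) (gR (actS2 r) i).
Proof.
move=> ni iM rr; have nM : (n <= M)%N by apply: leq_trans (ltnW iM).
have [l1 _ _ _] := Gr_invol nM rr.
have K : cancel (gR (actS2 r) i) (gR (actS2 r) i).
  by apply: gRK => x; [exact: actS2_invol | rewrite actS2_ge].
by split=> //; apply: loc_gR.
Qed.
Lemma Lconst (R : realType) (chi : (X -> X) -> R[i]) n (C : {set n.-tuple bool}) m :
  is_character chi -> (n <= m)%N -> chi (sA C m) = chi (sA C n).
Proof.
move=> Hc nm.
rewrite -(conj_swp C (leqnn n) nm).
exact: (chi_conj Hc (Gr_swp (leq_ltn_trans nm (ltnSn m)) (ltnSn m))
  (Gr_u C (leqnn n) (leq_ltn_trans nm (ltnSn m)))).
Qed.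

Lemma KU (R : realType) (chi : (X -> X) -> R[i]) n (C : {set n.-tuple bool}) i j :
  is_character chi -> (n <= i)%N -> (n <= j)%N ->
  chi (sA C i \o sA C j) = if i == j then 1 else chi (sA C n).
Proof.
move=> Hc ni nj; case: eqP => [<-|/eqP ij].
  have -> : sA C i \o sA C i = id by apply: funext => x /=; rewrite sAK.
  by case: Hc.
pose M := (i + j).+1.
have iM : (i < M)%N by rewrite ltnS leq_addr.
have jM : (j < M)%N by rewrite ltnS leq_addl.
rewrite -(conj_cnot C ni nj ij) (chi_conj Hc (Gr_cnot iM jM ij) (Gr_u C ni iM)).
exact: Lconst.
Qed.

Lemma KR (R : realType) (chi : (X -> X) -> R[i]) n (C : {set n.-tuple bool})
  (r : {perm n.-tuple bool}) i j :
  is_character chi -> (n <= i)%N -> (n <= j)%N ->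
  (forall t, r (r t) = t) -> (forall t, t \in C -> r t = t) ->
  chi (actS2 r \o sA C i \o sA C j) = if i == j then chi (actS2 r) else chi (sA C n).
Proof.
move=> Hc ni nj rr rC.
have rCC : forall t, (r t \in C) = (t \in C).
  move=> t; apply/idP/idP => [h|h]; last by rewrite rC.
  by have := rC _ h; rewrite rr => ->.
case: eqP => [<-|/eqP ij].
  by congr chi; apply: funext => x /=; rewrite sAK.
pose M := (i + j).+1.
have iM : (i < M)%N by rewrite ltnS leq_addr.
have jM : (j < M)%N by rewrite ltnS leq_addl.
have nM : (n <= M)%N by apply: leq_trans (ltnW iM).
have E : actS2 r \o sA C i \o sA C j = cnot i j \o (actS2 r \o sA C i) \o cnot i j.
  apply: funext => x /=.
  have := eqf (cnot_actS2 r ni nj) (sA C i (cnot i j x)) => /= ->.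
  by have := eqf (conj_cnot C ni nj ij) x => /= ->.
rewrite E (chi_conj Hc (Gr_cnot iM jM ij) (Gr_comp (Gr_invol nM rr) (Gr_u C ni iM))).
rewrite -(chi_conj Hc (Gr_gR ni iM rr) (Gr_comp (Gr_invol nM rr) (Gr_u C ni iM))).
rewrite (conj_gR ni rr rC).
exact: Lconst.
Qed.

Lemma KS (R : realType) (chi : (X -> X) -> R[i]) n (s : {perm n.-tuple bool})
  (Q : pred (n.-tuple bool)) i j :
  is_character chi -> (n <= i)%N -> (n <= j)%N ->
  (forall t, Q t -> s t != t) -> (forall t, s t != t -> Q (s t) = ~~ Q t) ->
  chi (actS2 s \o sA (fixed_tuples s) i \o sA (fixed_tuples s) j) = chi (actS2 s).
Proof.
move=> Hc ni nj Q1 Q2; case: (eqVneq i j) => [<-|ij].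
  by congr chi; apply: funext => x /=; rewrite sAK.
pose M := (i + j).+1.
have iM : (i < M)%N by rewrite ltnS leq_addr.
have jM : (j < M)%N by rewrite ltnS leq_addl.
have nM : (n <= M)%N by apply: leq_trans (ltnW iM).
rewrite -(conj_h ni nj Q1 Q2).
exact: (chi_conj Hc (Gr_hQ Q ni nj iM jM) (Gr_actS2 s nM)).
Qed.
Unset Implicit Arguments.
Theorem mainTheorem7 (R : realType) (chi : (X -> X) -> R[i]) (alpha : \bar R) :
  is_indecomposable_character chi ->
  (0 <= alpha)%E ->
  (forall (k : nat) (C : {set k.-tuple bool}),
      (fun m => complex.Re (chi (sA C m))) @ \oo --> powE (mu_cyl R C) alpha /\
      (fun m => complex.Im (chi (sA C m))) @ \oo --> (0 : R)) ->
  forall (n : nat) (s : {perm n.-tuple bool}),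
    cycles_one_or_even s ->
    chi (actS2 s) = ((powE (mu_cyl R (fixed_tuples s)) alpha)%:C)%C.
Proof.
move=> [Hc _] _ Hlim n s Hcyc.
set C := fixed_tuples s.
set L := chi (sA C n).
have HL : L = ((powE (mu_cyl R C) alpha)%:C)%C.
  have [h1 h2] := Hlim n C.
  have e1 := lim_evconst (fun m nm => congr1 (@complex.Re R) (@Lconst R chi n C m Hc nm)) h1.
  have e2 := lim_evconst (fun m nm => congr1 (@complex.Im R) (@Lconst R chi n C m Hc nm)) h2.
  by apply/eqP; rewrite eq_complex /= -/L e1 e2 !eqxx.
rewrite -HL.
have [ho1 ho2 ho3] := osig_props s.
have [q1 q2] := oQ_props Hcyc.
pose r2 : {perm n.-tuple bool} := perm (can_inj ho1).
have r2E : forall t, r2 t = osig s t by move=> t; rewrite permE.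
pose r1 : {perm n.-tuple bool} := (r2 * s)%g.
have r1E : forall t, r1 t = s (r2 t) by move=> t; rewrite permM.
have rr2 : forall t, r2 (r2 t) = t by move=> t; rewrite !r2E ho1.
have rr1 : forall t, r1 (r1 t) = t by move=> t; rewrite !r1E !r2E ho3 ho1.
have fC : forall t, t \in C -> s t = t by move=> t; rewrite inE => /eqP.
have rC2 : forall t, t \in C -> r2 t = t by move=> t /fC; rewrite r2E; apply: ho2.
have rC1 : forall t, t \in C -> r1 t = t by move=> t tC; rewrite r1E rC2 // fC.
have rCC2 : forall t, (r2 t \in C) = (t \in C).
  move=> t; apply/idP/idP => [h|h]; last by rewrite rC2.
  by have := rC2 _ h; rewrite rr2 => ->.
have sr : forall t, s t = r1 (r2 t) by move=> t; rewrite r1E rr2.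
have SR : actS2 s = actS2 r1 \o actS2 r2.
  apply: funext => x; apply: (X_ext (n:=n)); first by rewrite /= !pref_actS2 sr.
  by move=> k nk; rewrite /= !actS2_ge.
have SinvR : actS2 (s^-1)%g = actS2 r2 \o actS2 r1.
  apply: funext => x; apply: (X_ext (n:=n)).
    rewrite /= !pref_actS2; apply: (@perm_inj _ s); by rewrite permKV sr rr2 rr1.
  by move=> k nk; rewrite /= !actS2_ge.
set zS := chi (actS2 s).
have KS' : forall i j, (n <= i)%N -> (n <= j)%N ->
    chi (actS2 r2 \o actS2 r1 \o sA C i \o sA C j) = zS.
  move=> i j ni nj.
  pose M := (i + j).+1.
  have iM : (i < M)%N by rewrite ltnS leq_addr.
  have jM : (j < M)%N by rewrite ltnS leq_addl.
  have nM : (n <= M)%N by apply: leq_trans (ltnW iM).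
  have E : actS2 r2 \o actS2 r1 \o sA C i \o sA C j =
           actS2 r2 \o (actS2 s \o sA C i \o sA C j) \o actS2 r2.
    apply: funext => x /=; rewrite SR /=.
    have := eqf (@actS2_sA n r2 C i ni rCC2) (sA C j (actS2 r2 x)) => /= ->.
    have := eqf (@actS2_sA n r2 C j nj rCC2) (actS2 r2 x) => /= ->.
    by rewrite actS2_invol.
  rewrite E (chi_conj Hc (Gr_invol nM rr2) (Gr_comp (Gr_comp (Gr_actS2 s nM) (Gr_u C ni iM)) (Gr_u C nj jM))).
  exact: (KS Hc ni nj q1 q2).
have Ineq : forall N, (0 < N)%N ->
    0 <= (1 - L) - (zS - L) *+ N /\
    0 <= (3%:R + L - (chi (actS2 r1) + chi (actS2 r2)) *+ 2) + (zS - L) *+ N.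
  move=> [//|N'] _.
  pose M := (n + N'.+1)%N.
  pose U (i : 'I_N'.+1) := sA C (n + i).
  have nM : (n <= M)%N by apply: leq_addr.
  have GU : forall i, Gr M (U i) (U i).
    by move=> i; apply: Gr_u; [apply: leq_addr | rewrite ltn_add2l].
  have KU' : forall i j : 'I_N'.+1, chi (U i \o U j) = if i == j then 1 else L.
    by move=> i j; rewrite /U KU ?leq_addr // eqn_add2l.
  have KR1 : forall i j : 'I_N'.+1, chi (actS2 r1 \o U i \o U j) = if i == j then chi (actS2 r1) else L.
    by move=> i j; rewrite /U KR ?leq_addr // eqn_add2l.
  have KR2 : forall i j : 'I_N'.+1, chi (actS2 r2 \o U i \o U j) = if i == j then chi (actS2 r2) else L.
    by move=> i j; rewrite /U KR ?leq_addr // eqn_add2l.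
  have KSU : forall i j : 'I_N'.+1, chi (actS2 s \o U i \o U j) = zS.
    by move=> i j; rewrite /U (KS Hc _ _ q1 q2) ?leq_addr.
  have KSU' : forall i j : 'I_N'.+1, chi (actS2 r2 \o actS2 r1 \o U i \o U j) = zS.
    by move=> i j; rewrite /U KS' ?leq_addr.
  have GS := Gr_actS2 s nM.
  have GS' := Gr_actS2 (s^-1)%g nM.
  have GR1 := Gr_invol nM rr1.
  have GR2 := Gr_invol nM rr2.
  split.
  - have := fam_sum (m := 2) (U := U) (F := fun a => nth id [:: actS2 s; id] a)
      (F' := fun a => nth id [:: actS2 (s^-1)%g; id] a)
      (A := fun a b => nth 0 (nth [::] [:: [:: 1; zS]; [:: zS; 1]] a) b)
      (B := fun a b => nth 0 (nth [::] [:: [:: L; zS]; [:: zS; L]] a) b)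
      (fun a => nth 0 [:: 1; -1] a) Hc GU.
    have GF : forall a : 'I_2, Gr M (nth id [:: actS2 s; id] a) (nth id [:: actS2 (s^-1)%g; id] a).
      by case=> [[|[|a]] Ha] //=; apply: Gr_id.
    move=> /(_ GF) H; lapply H; last first.
      move=> a b i j; case: a => [[|[|a]] Ha] //; case: b => [[|[|b]] Hb] //=.
      - rewrite -[LHS]/(chi (actS2 s \o (U i \o U j) \o actS2 (s^-1)%g)).
        by rewrite (chi_conj Hc GS (Gr_comp (GU i) (GU j))) KU'.
      - rewrite -[LHS]/(chi (actS2 s \o U i \o U j)) KSU; by case: (i == j).
      - rewrite -[LHS]/(chi ((U i \o U j) \o actS2 (s^-1)%g)).
        rewrite (chi_swap Hc (Gr_comp (GU i) (GU j)) GS') SinvR.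
        rewrite -[LHS]/(chi (actS2 r2 \o actS2 r1 \o U i \o U j)) KSU'; by case: (i == j).
      - by rewrite -[LHS]/(chi (U i \o U j)) KU'.
    clear H => H.
    rewrite -(@pmulrn_lge0 _ _ (N'.+1).*2) ?double_gt0 //.
    apply: (le_trans H); rewrite le_eqVlt; apply/orP; left; apply/eqP.
    rewrite !big_ord_recl !big_ord0 /=.
    rewrite rmorphN rmorph1 subn1 /= -mul2n.
    ring.
  - have := fam_sum (m := 3) (U := U) (F := fun a => nth id [:: actS2 r1; id; actS2 r2] a)
      (F' := fun a => nth id [:: actS2 r1; id; actS2 r2] a)
      (A := fun a b => nth 0 (nth [::] [:: [:: 1; chi (actS2 r1); zS];
                                          [:: chi (actS2 r1); 1; chi (actS2 r2)];
                                          [:: zS; chi (actS2 r2); 1]] a) b)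
      (B := fun a b => nth 0 (nth [::] [:: [:: L; L; zS]; [:: L; L; L]; [:: zS; L; L]] a) b)
      (fun a => nth 0 [:: 1; -2; 1] a) Hc GU.
    have GF : forall a : 'I_3, Gr M (nth id [:: actS2 r1; id; actS2 r2] a) (nth id [:: actS2 r1; id; actS2 r2] a).
      by case=> [[|[|[|a]]] Ha] //=; apply: Gr_id.
    move=> /(_ GF) H; lapply H; last first.
      move=> a b i j; case: a => [[|[|[|a]]] Ha] //; case: b => [[|[|[|b]]] Hb] //=.
      - rewrite -[LHS]/(chi (actS2 r1 \o (U i \o U j) \o actS2 r1)).
        by rewrite (chi_conj Hc GR1 (Gr_comp (GU i) (GU j))) KU'.
      - by rewrite -[LHS]/(chi (actS2 r1 \o U i \o U j)) KR1.
      - rewrite -[LHS]/(chi ((actS2 r1 \o U i \o U j) \o actS2 r2)).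
        rewrite (chi_swap Hc (Gr_comp (Gr_comp GR1 (GU i)) (GU j)) GR2).
        rewrite -[LHS]/(chi (actS2 r2 \o actS2 r1 \o U i \o U j)) KSU'; by case: (i == j).
      - rewrite -[LHS]/(chi ((U i \o U j) \o actS2 r1)).
        rewrite (chi_swap Hc (Gr_comp (GU i) (GU j)) GR1).
        by rewrite -[LHS]/(chi (actS2 r1 \o U i \o U j)) KR1.
      - by rewrite -[LHS]/(chi (U i \o U j)) KU'.
      - rewrite -[LHS]/(chi ((U i \o U j) \o actS2 r2)).
        rewrite (chi_swap Hc (Gr_comp (GU i) (GU j)) GR2).
        by rewrite -[LHS]/(chi (actS2 r2 \o U i \o U j)) KR2.
      - rewrite -[LHS]/(chi ((actS2 r2 \o U i \o U j) \o actS2 r1)).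
        rewrite (chi_swap Hc (Gr_comp (Gr_comp GR2 (GU i)) (GU j)) GR1).
        rewrite -[LHS]/(chi ((actS2 r1 \o actS2 r2) \o U i \o U j)) -SR KSU; by case: (i == j).
      - by rewrite -[LHS]/(chi (actS2 r2 \o U i \o U j)) KR2.
      - rewrite -[LHS]/(chi (actS2 r2 \o (U i \o U j) \o actS2 r2)).
        by rewrite (chi_conj Hc GR2 (Gr_comp (GU i) (GU j))) KU'.
    clear H => H.
    rewrite -(@pmulrn_lge0 _ _ (N'.+1).*2) ?double_gt0 //.
    apply: (le_trans H); rewrite le_eqVlt; apply/orP; left; apply/eqP.
    rewrite !big_ord_recl !big_ord0 /=.
    rewrite ?rmorphN ?rmorph1 ?rmorph_nat subn1 /= -mul2n.
    ring.
set K1 := 1 - L.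
set K2 := 3%:R + L - (chi (actS2 r1) + chi (actS2 r2)) *+ 2.
set d := zS - L.
have ReB : forall N, (0 < N)%N ->
    complex.Re d *+ N <= complex.Re K1 /\ - complex.Re K2 <= complex.Re d *+ N.
  move=> N N0; have [h1 h2] := Ineq N N0.
  move: h1 h2; rewrite !lecE => /andP[_ h1] /andP[_ h2].
  rewrite raddfB raddfMn /= subr_ge0 in h1.
  rewrite raddfD raddfMn /= -lerBlDr sub0r in h2.
  rewrite raddfMn lerNl in h2.
  split; [exact: h1|]. by move: h2; rewrite /K2 /d mulNrn.
have Red : complex.Re d = 0 by apply: (real_squeeze ReB).
have Imd : complex.Im d = 0.
  have [h1 _] := Ineq 1%N isT.
  move: h1; rewrite lecE => /andP[/eqP h1 _].
  move: h1; rewrite raddfB raddfMn /= /K1 raddfB /= HL /=.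
  rewrite subr0 sub0r mulr1n => /eqP; rewrite oppr_eq0 => /eqP h.
  by rewrite /d HL.
apply/eqP; rewrite -subr_eq0 -/d; apply/eqP.
by apply/eqP; rewrite eq_complex Red Imd /= !eqxx.
Qed.
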